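(* Let $m\ge4$ be even, $h=\frac m2$, and $\bar A=\{1,2,\dots,2^{h-1}-1\}$. For any $i\in\bar A$ and $j\in\Gamma_{(h)}$, $C_{i+2^h}\cap C_{j+2^h}\neq\emptyset$ only if $i=j$ and $j\in\Gamma_{(h-1)}$.
   Context: Let $v=2^m-1$. For an integer $i$, $C_i=\{i\cdot 2^s \bmod v: s\ge 0\}$ is the $2$-cyclotomic coset of $i$ modulo $v$. For a positive integer $t$, $\Gamma_{(t)}=\{j:1\le j\le 2^t-1,\ j\text{ odd}\}$. *)

(* Defs.v *)
From mathcomp Require Import all_boot.
Set Implicit Arguments. Unset Strict Implicit. Unset Printing Implicit Defensive.

Definition vv (m : nat) : nat := 2 ^ m - 1.

Definition in_coset (m i x : nat) : Prop :=
  exists s : nat, x = (i * 2 ^ s) %% vv m.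

Definition cosets_meet (m i j : nat) : Prop :=
  exists x : nat, in_coset m i x /\ in_coset m j x.

Definition Gamma (t j : nat) : bool := [&& 1 <= j, j <= 2 ^ t - 1 & odd j].

(* Main.v *)
Require Import Defs.
From mathcomp Require Import all_boot zify.

Lemma v_gt1 m : 2 <= m -> 1 < vv m.
Proof. move=> hm; rewrite /vv. have : 2^2 <= 2^m by rewrite leq_exp2l. lia. Qed.

Lemma pow_m1 m k : 2 <= m -> 2^(m*k) %% vv m = 1.
Proof.
move=> hm; have hv := @v_gt1 m hm.
have e : 2^m = vv m + 1 by rewrite /vv; have := expn_gt0 2 m; lia.
by rewrite expnM -modnXm e modnDl (modn_small hv) exp1n modn_small.
Qed.

Lemma pow_red m a e : 2 <= m -> (a * 2^e) %% vv m = (a * 2^(e %% m)) %% vv m.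
Proof.
move=> hm; rewrite {1}(divn_eq e m) expnD [e %/ m * m]mulnC mulnCA.
by rewrite -modnMml pow_m1 // mul1n.
Qed.

Lemma rot m a r : r <= m -> a < vv m ->
  (a * 2^r) %% vv m = a %/ 2^(m-r) + (a %% 2^(m-r)) * 2^r.
Proof.
move=> hr ha.
set d := 2^(m-r). set P := 2^r.
have hPd : 2^m = P * d by rewrite /P /d -expnD subnKC.
have hd : 0 < d by rewrite expn_gt0.
have hP : 0 < P by rewrite expn_gt0.
have ea := divn_eq a d. have hw := ltn_pmod a hd.
set q := a %/ d in ea *. set w := a %% d in ea hw *.
have hv : vv m = P * d - 1 by rewrite /vv hPd.
have hq : q < P by rewrite /q ltn_divLR //; rewrite hv in ha; lia.
have -> : a * P = q * vv m + (q + w * P).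
  rewrite hv ea. nia.
rewrite modnMDl modn_small //. rewrite hv; rewrite hv in ha. nia.
Qed.
Lemma c0 H D q w i j : D = H*H -> 2 <= H -> i < H -> j < H -> i + H = q*D + w -> w < D -> j + H = q + w -> i = j.
Proof. move=> -> hH hi hj e hw e2. have q0 : q = 0 by nia. subst q. lia. Qed.
Lemma c1 H H' D P P' q w i j k : 2*H <= D -> P = 2*P' -> H = 2*H' -> i < H -> j = 2*k+1 ->
  i + H = q*D + w -> w < D -> j + H = q + w*P -> False.
Proof. move=> hD eP eH hi ej e hw e2. have q0 : q = 0 by nia. subst. lia. Qed.
Lemma c2 H q w i j : 1 <= i -> i < H -> j < H -> i + H = q*H + w -> w < H -> j + H = q + w*H -> i = j.
Proof. move=> hi1 hi hj e hw e2. have q1 : q = 1 by nia. subst q. have : w = i by lia. move=> ?; subst w. case: (leqP 2 i) => h2.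
  have := leq_mul h2 (leqnn H). lia.
have ei : i = 1 by lia.
subst i. lia. Qed.
Lemma c3 H D P q w i j : 2*H <= P -> 2 <= D -> i < H -> j < H ->
  i + H = q*D + w -> j + H = q + w*P -> False.
Proof. move=> hP hD hi hj e e2. have w0 : w = 0 by nia. subst w. nia. Qed.
Lemma meet_rot m a b : 2 <= m -> b < vv m -> cosets_meet m a b ->
  exists2 r, r < m & b = (a * 2^r) %% vv m.
Proof.
move=> hm hb [x [[s ->] [t e]]].
exists ((s + t*(m-1)) %% m); first by rewrite ltn_pmod //; lia.
rewrite -pow_red // expnD mulnA -modnMml e modnMml -mulnA -expnD.
have -> : t + t*(m-1) = m * t by rewrite -{1}(muln1 t) -mulnDr; lia.
by rewrite -modnMmr pow_m1 // muln1 modn_small.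
Qed.

Theorem lemma12 (m : nat) (hm4 : 4 <= m) (hmeven : ~~ odd m) (i j : nat) :
  let h := m./2 in
  1 <= i <= 2 ^ (h - 1) - 1 ->
  Gamma h j ->
  cosets_meet m (i + 2 ^ h) (j + 2 ^ h) ->
  i = j /\ Gamma (h - 1) j.
Proof.
move=> h /andP[hi1 hi2] hG hmeet.
move: (hG) => /and3P[hj1 hj2 hjo].
have em : m = h + h by rewrite /h -[LHS](odd_double_half m) (negbTE hmeven) add0n addnn.
have h2 : 2 <= h by lia.
have eH : 2^h = 2 * 2^(h-1) by rewrite -expnS; congr (expn 2 _); lia.
have hH1 : 0 < 2^(h-1) by rewrite expn_gt0.
have eM : 2^m = 2^h * 2^h by rewrite em expnD.
have hv : vv m = 2^m - 1 by [].
have hjH : j < 2^h by have := expn_gt0 2 h; lia.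
have hiH : i < 2^(h-1) by lia.
have hav : i + 2^h < vv m by rewrite hv eM; nia.
have hbv : j + 2^h < vv m by rewrite hv eM; nia.
have [r hr eb] := @meet_rot m _ _ (ltnW (leq_trans (isT : 2 < 4) hm4)) hbv hmeet.
rewrite rot // in eb; last exact: ltnW.
have hd : 0 < 2^(m-r) by rewrite expn_gt0.
have ea := divn_eq (i + 2^h) (2^(m-r)). have hw := ltn_pmod (i + 2^h) hd.
move: eb ea hw.
set q := _ %/ _. set w := _ %% _.
move=> eb ea hw.
suff eij : i = j by split=> //; apply/and3P; split=> //; rewrite -eij.
clearbody q w.
have hH2 : 2^1 <= 2^h by rewrite leq_exp2l //; lia.
rewrite expn1 in hH2.
have hiH2 : i < 2^h by lia.
have [r0|rpos] := posnP r.
  subst r. rewrite subn0 in ea hw. rewrite expn0 muln1 in eb.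
  exact: (c0 _ _ _ _ _ _ eM hH2 hiH2 hjH ea hw eb).
have [rlt|rge] := ltnP r h.
  have hdH : 2 * 2^h <= 2^(m-r) by rewrite -expnS leq_exp2l //; lia.
  have e2 : 2^r = 2 * 2^(r-1) by rewrite -expnS; congr (expn 2 _); lia.
  have ej : j = 2 * j./2 + 1 by rewrite -[LHS](odd_double_half j) hjo addnC -muln2 mulnC.
  exfalso; exact: (c1 _ _ _ _ _ _ _ _ _ _ hdH e2 eH hiH2 ej ea hw eb).
have [req|rgt] := eqVneq r h.
  subst r. have e' : m - h = h by lia. rewrite e' in ea hw.
  exact: (c2 _ _ _ _ _ hi1 hiH2 hjH ea hw eb).
have hP : 2 * 2^h <= 2^r by rewrite -expnS leq_exp2l //; lia.
have hD : 2^1 <= 2^(m-r) by rewrite leq_exp2l //; lia.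
rewrite expn1 in hD.
exfalso; exact: (c3 _ _ _ _ _ _ _ hP hD hiH2 hjH ea eb).
Qed.
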